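(* Let $A=(a_{ij}) \in \mathbb{R}^{m\times r}$, $B=(b_{ij}) \in \mathbb{R}^{r\times n}$, let $S \subseteq \mathbb{R}^n$ be an arbitrary subset, and for $\kappa\in\mathbb{R}^r_+$ let $f_\kappa\colon \mathbb{R}^n_+\to\mathbb{R}^m$, $f_\kappa(x)=A_\kappa\, x^B$. The following statements are equivalent: (inj) $f_\kappa$ is injective with respect to $S$, for all $\kappa \in \mathbb{R}^r_+$. (jac) $\ker(J_{f_\kappa}(x)) \cap S^* = \emptyset$ for all $\kappa \in \mathbb{R}^r_+$ and $x \in \mathbb{R}^n_+$, where $J_{f_\kappa}(x)$ is the Jacobian matrix of $f_\kappa$ at $x$. (lin) $\ker(A_\kappa B_\lambda) \cap S^* = \emptyset$ for all $\kappa \in \mathbb{R}^r_+$ and $\lambda\in \mathbb{R}^n_+$. (sig) $\sigma(\ker(A)) \cap \sigma(B(\Sigma(S^* ))) = \emptyset$.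
   Context: $\mathbb{R}_+$ denotes the strictly positive reals. For $x\in\mathbb{R}^n_+$ and $B\in\mathbb{R}^{r\times n}$ with rows $b_1,\dots,b_r$, $x^B\in\mathbb{R}^r_+$ is the vector with $(x^B)_j = x^{b_j}=x_1^{b_{j1}}\cdots x_n^{b_{jn}}$ (real exponents allowed). For $\kappa\in\mathbb{R}^r_+$, $A_\kappa = A\,\mathrm{diag}(\kappa)$; for $\lambda\in\mathbb{R}^n_+$, $B_\lambda = B\,\mathrm{diag}(\lambda)$. A function $g$ defined on $\Omega\subseteq\mathbb{R}^n$ is injective with respect to $S\subseteq\mathbb{R}^n$ if $x,y\in\Omega$, $x\neq y$, $x-y\in S$ imply $g(x)\neq g(y)$ (here $\Omega=\mathbb{R}^n_+$). For $x\in\mathbb{R}^n$, $\sigma(x)\in\{-,0,+\}^n$ is the componentwise sign; for $S\subseteq\mathbb{R}^n$, $\sigma(S)=\{\sigma(x)\mid x\in S\}$, $\Sigma(S)=\sigma^{-1}(\sigma(S))$ (the set of all vectors having the sign vector of some element of $S$), and $S^*=S\setminus\{0\}$. A matrix $B$ is identified with the linear map $x\mapsto Bx$, and $B(S)=\{Bx\mid x\in S\}$. *)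

(* Defs.v *)
From mathcomp Require Import ssreflect ssrbool eqtype ssrnat seq fintype.
From Stdlib Require Import Reals ROrderedType.
Open Scope R_scope.
Set Implicit Arguments.
Unset Strict Implicit.

Definition sumI (n : nat) (F : 'I_n -> R) : R :=
  foldr (fun i acc => F i + acc) 0 (enum 'I_n).
Definition prodI (n : nat) (F : 'I_n -> R) : R :=
  foldr (fun i acc => F i * acc) 1 (enum 'I_n).

Definition posvec (n : nat) (x : 'I_n -> R) : Prop := forall i, 0 < x i.

Definition zerov (n : nat) : 'I_n -> R := fun _ => 0.
Definition subv (n : nat) (x y : 'I_n -> R) : 'I_n -> R := fun i => x i - y i.

Definition mulmv (p q : nat) (M : 'I_p -> 'I_q -> R) (v : 'I_q -> R) : 'I_p -> R :=
  fun i => sumI (fun k => M i k * v k).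
Definition mulmm (p q s : nat) (M : 'I_p -> 'I_q -> R) (N : 'I_q -> 'I_s -> R)
  : 'I_p -> 'I_s -> R := fun i k => sumI (fun j => M i j * N j k).
Definition scalecols (p q : nat) (M : 'I_p -> 'I_q -> R) (d : 'I_q -> R)
  : 'I_p -> 'I_q -> R := fun i j => M i j * d j.

Definition monomials (r n : nat) (B : 'I_r -> 'I_n -> R) (x : 'I_n -> R) : 'I_r -> R :=
  fun j => prodI (fun k => Rpower (x k) (B j k)).

Definition fk (m r n : nat) (A : 'I_m -> 'I_r -> R) (B : 'I_r -> 'I_n -> R)
  (kappa : 'I_r -> R) (x : 'I_n -> R) : 'I_m -> R :=
  mulmv (scalecols A kappa) (monomials B x).

Definition injective_wrt (m n : nat) (g : ('I_n -> R) -> ('I_m -> R))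
  (S : ('I_n -> R) -> Prop) : Prop :=
  forall x y, posvec x -> posvec y -> x <> y -> S (subv x y) -> g x <> g y.

Definition upd (n : nat) (x : 'I_n -> R) (k : 'I_n) (t : R) : 'I_n -> R :=
  fun l => if l == k then t else x l.

Definition is_jacobian (m n : nat) (g : ('I_n -> R) -> ('I_m -> R))
  (x : 'I_n -> R) (J : 'I_m -> 'I_n -> R) : Prop :=
  forall i k, derivable_pt_lim (fun t => g (upd x k t) i) (x k) (J i k).

Definition ker_avoids (p q : nat) (M : 'I_p -> 'I_q -> R)
  (S : ('I_q -> R) -> Prop) : Prop :=
  forall v, S v -> v <> (@zerov q) -> mulmv M v <> (@zerov p).

(* sign and sign vectors; Lt = -, Eq = 0, Gt = + *)
Definition sgnR (a : R) : comparison := Rcompare a 0.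
Definition signvec (n : nat) (v : 'I_n -> R) : 'I_n -> comparison := fun i => sgnR (v i).

Definition Sigma_set (n : nat) (T : ('I_n -> R) -> Prop) : ('I_n -> R) -> Prop :=
  fun v => exists w, T w /\ signvec v = signvec w.

Definition nonzero_part (n : nat) (S : ('I_n -> R) -> Prop) : ('I_n -> R) -> Prop :=
  fun v => S v /\ v <> (@zerov n).

(* Main.v *)
Require Import Defs.
From mathcomp Require Import ssreflect ssrbool eqtype ssrnat seq fintype.
From Stdlib Require Import Reals ROrderedType Lra FunctionalExtensionality.
Open Scope R_scope.

Lemma sLt a : a < 0 -> sgnR a = Lt.
Proof. rewrite /sgnR => h; case: (Rcompare_spec a 0) => h'; lra || done. Qed.
Lemma sEq a : a = 0 -> sgnR a = Eq.
Proof. rewrite /sgnR => h; case: (Rcompare_spec a 0) => h'; lra || done. Qed.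
Lemma sGt a : 0 < a -> sgnR a = Gt.
Proof. rewrite /sgnR => h; case: (Rcompare_spec a 0) => h'; lra || done. Qed.

Lemma sgn_eq_of a b : (a < 0 -> b < 0) -> (a = 0 -> b = 0) -> (0 < a -> 0 < b) ->
  sgnR a = sgnR b.
Proof.
move=> h1 h2 h3; case: (Rtotal_order a 0) => [h|[h|h]].
- by rewrite (sLt _ h) (sLt _ (h1 h)).
- by rewrite (sEq _ h) (sEq _ (h2 h)).
- by rewrite (sGt _ h) (sGt _ (h3 h)).
Qed.

Lemma sgn_inv a b : sgnR a = sgnR b ->
  (a < 0 /\ b < 0) \/ (a = 0 /\ b = 0) \/ (0 < a /\ 0 < b).
Proof.
case: (Rtotal_order a 0) => [h|[h|h]]; case: (Rtotal_order b 0) => [h'|[h'|h']];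
 rewrite ?(sLt _ h) ?(sEq _ h) ?(sGt _ h) ?(sLt _ h') ?(sEq _ h') ?(sGt _ h') => // _; lra.
Qed.

Lemma sgn_mulpos c a : 0 < c -> sgnR (c * a) = sgnR a.
Proof.
move=> hc; apply: sgn_eq_of => h; try nra.
Qed.

Lemma sgn_mulpos_inv c a : 0 < c -> sgnR a = sgnR (c * a).
Proof. by move=> hc; rewrite sgn_mulpos. Qed.

Lemma sgn_exp_diff a b : sgnR (exp a - exp b) = sgnR (a - b).
Proof.
apply: sgn_eq_of => h.
- case: (Rtotal_order a b) => [h'|[h'|h']]; [lra| subst; lra |].
  have := exp_increasing _ _ h'; lra.
- have := exp_inv a b; lra.
- case: (Rtotal_order a b) => [h'|[h'|h']]; [| subst; lra | lra].
  have := exp_increasing _ _ h'; lra.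
Qed.

Lemma sgn_ln_diff a b : 0 < a -> 0 < b -> sgnR (ln a - ln b) = sgnR (a - b).
Proof.
move=> ha hb; apply: sgn_eq_of => h.
- case: (Rtotal_order a b) => [h'|[h'|h']]; [lra| subst; lra |].
  have := ln_increasing _ _ hb h'; lra.
- have := ln_inv a b ha hb; lra.
- case: (Rtotal_order a b) => [h'|[h'|h']]; [| subst; lra | lra].
  have := ln_increasing _ _ ha h'; lra.
Qed.

Definition divf (a b : R) : R := if Req_EM_T a 0 then 1 else b / a.
Lemma divf_pos a b : sgnR a = sgnR b -> 0 < divf a b.
Proof.
rewrite /divf => h; case: (Req_EM_T a 0) => ha /=; first lra.
case: (sgn_inv _ _ h) => [[h1 h2]|[[h1 h2]|[h1 h2]]]; try lra.
- have -> : b / a = (- b) / (- a) by field. apply: Rdiv_lt_0_compat; lra.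
- apply: Rdiv_lt_0_compat; lra.
Qed.
Lemma divf_mul a b : sgnR a = sgnR b -> divf a b * a = b.
Proof.
rewrite /divf => h; case: (Req_EM_T a 0) => ha /=.
- case: (sgn_inv _ _ h); lra.
- by field.
Qed.

(* picking x, y with x - y = a and ln x - ln y = b *)
Definition pickx (a b : R) : R := if Req_EM_T b 0 then 1 else a * exp b / (exp b - 1).
Definition picky (a b : R) : R := if Req_EM_T b 0 then 1 else a / (exp b - 1).
Lemma pick_ok a b : sgnR a = sgnR b ->
  0 < pickx a b /\ 0 < picky a b /\ pickx a b - picky a b = a /\
  ln (pickx a b) - ln (picky a b) = b.
Proof.
rewrite /pickx /picky => h; case: (Req_EM_T b 0) => hb /=.
- rewrite ln_1; case: (sgn_inv _ _ h); lra.
- have he := exp_pos b.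
  have hne : exp b - 1 <> 0.
  { move=> e; have : exp b = exp 0 by rewrite exp_0; lra. move/exp_inv; lra. }
  have hy : 0 < a / (exp b - 1).
  { case: (sgn_inv _ _ h) => [[h1 h2]|[[h1 h2]|[h1 h2]]]; try lra.
    - have := exp_increasing _ _ h2; rewrite exp_0 => e.
      have -> : a / (exp b - 1) = (- a) / (1 - exp b) by field; lra.
      apply: Rdiv_lt_0_compat; lra.
    - have := exp_increasing _ _ h2; rewrite exp_0 => e.
      apply: Rdiv_lt_0_compat; lra. }
  have ex : a * exp b / (exp b - 1) = exp b * (a / (exp b - 1)) by field.
  rewrite ex; split; [by apply: Rmult_lt_0_compat|split; first done; split].
  + by field.
  + rewrite ln_mult // ln_exp; ring.
Qed.

Definition sl {T : Type} (s : seq T) (F : T -> R) : R := foldr (fun i acc => F i + acc) 0 s.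

Lemma sl_ext T (s : seq T) F G : (forall i, F i = G i) -> sl s F = sl s G.
Proof. by move=> h; elim: s => //= a s IH; rewrite h IH. Qed.
Lemma sl_add T (s : seq T) F G : sl s (fun i => F i + G i) = sl s F + sl s G.
Proof. elim: s => /= [|a s IH]; [lra| rewrite IH; ring]. Qed.
Lemma sl_sub T (s : seq T) F G : sl s (fun i => F i - G i) = sl s F - sl s G.
Proof. elim: s => /= [|a s IH]; [lra| rewrite IH; ring]. Qed.
Lemma sl_scal T (s : seq T) c F : sl s (fun i => c * F i) = c * sl s F.
Proof. elim: s => /= [|a s IH]; [ring| rewrite IH; ring]. Qed.
Lemma sl_mulr T (s : seq T) c F : sl s F * c = sl s (fun i => F i * c).
Proof. elim: s => /= [|a s IH]; [ring| rewrite -IH; ring]. Qed.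
Lemma sl_zero T (s : seq T) : sl s (fun _ => 0) = 0.
Proof. elim: s => /= [|a s IH]; [ring| rewrite IH; ring]. Qed.
Lemma sl_swap T U (s : seq T) (t : seq U) F :
  sl s (fun i => sl t (fun j => F i j)) = sl t (fun j => sl s (fun i => F i j)).
Proof.
elim: s => /= [|a s IH]; first by rewrite sl_zero.
by rewrite sl_add IH.
Qed.
Lemma sl_delta (T : eqType) (s : seq T) k F : uniq s ->
  sl s (fun l => if l == k then F l else 0) = if k \in s then F k else 0.
Proof.
elim: s => //= a s IH /andP [ha hu]; rewrite IH // in_cons.
case: eqP => [e|hne].
- subst a; rewrite eqxx (negbTE ha) /=; ring.
- have -> : (k == a) = false by apply/eqP => e; apply: hne.
  rewrite /=; ring.
Qed.

Lemma sumI_sl n (F : 'I_n -> R) : sumI F = sl (enum 'I_n) F.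
Proof. by []. Qed.

Lemma sumI_delta n (k : 'I_n) F : sumI (fun l => if l == k then F l else 0) = F k.
Proof. by rewrite sumI_sl sl_delta ?enum_uniq // mem_enum. Qed.

Lemma prod_exp T (s : seq T) F :
  foldr (fun i acc => exp (F i) * acc) 1 s = exp (sl s F).
Proof. elim: s => /= [|a s IH]; first by rewrite exp_0. by rewrite IH exp_plus. Qed.

Lemma mono_exp {r n : nat} (B : 'I_r -> 'I_n -> R) x j :
  monomials B x j = exp (sumI (fun l => B j l * ln (x l))).
Proof. by rewrite /monomials /prodI /Rpower prod_exp. Qed.

Lemma sl_deriv T (s : seq T) (F : T -> R -> R) d t0 :
  (forall l, derivable_pt_lim (F l) t0 (d l)) ->
  derivable_pt_lim (fun t => sl s (fun l => F l t)) t0 (sl s d).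
Proof.
move=> h; elim: s => /= [|a s IH].
- exact: (derivable_pt_lim_const 0 t0).
- exact: (derivable_pt_lim_plus (F a) (fun t => sl s (fun l => F l t)) t0 _ _ (h a) IH).
Qed.

Lemma upd_same n (x : 'I_n -> R) k : upd x k (x k) = x.
Proof. apply: functional_extensionality => l; rewrite /upd; by case: eqP => [->|]. Qed.

Definition Jf {m r n : nat} (A : 'I_m -> 'I_r -> R) (B : 'I_r -> 'I_n -> R) kappa x :=
  mulmm (scalecols A (fun j => kappa j * monomials B x j)) (scalecols B (fun k => / x k)).

Lemma jac_formula {m r n : nat} (A : 'I_m -> 'I_r -> R) (B : 'I_r -> 'I_n -> R) kappa x :
  posvec x -> is_jacobian (fk A B kappa) x (Jf A B kappa x).
Proof.
move=> hx i k.
have hl : forall j, derivable_pt_lim (fun t => sumI (fun l => B j l * ln (upd x k t l))) (x k)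
            (sumI (fun l => if l == k then B j l * / x k else 0)).
{ move=> j; apply: (@sl_deriv _ (enum (ordinal n)) (fun l t => B j l * ln (upd x k t l)) _ (x k)) => l.
  rewrite /upd; case: (l == k).
  - exact: (derivable_pt_lim_scal ln (B j l) (x k) _ (derivable_pt_lim_ln _ (hx k))).
  - have := derivable_pt_lim_const (B j l * ln (x l)) (x k). by []. }
have hm : forall j, derivable_pt_lim (fun t => monomials B (upd x k t) j) (x k)
            (monomials B x j * (B j k * / x k)).
{ move=> j.
  have := derivable_pt_lim_comp _ exp (x k) _ _ (hl j) (derivable_pt_lim_exp _).
  rewrite upd_same sumI_delta mono_exp.
  have e : (comp exp (fun t => sumI (fun l => B j l * ln (upd x k t l)))) =
           (fun t => monomials B (upd x k t) j).
  { apply: functional_extensionality => t; by rewrite mono_exp. }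
  by rewrite e. }
rewrite /fk /mulmv /Jf /mulmm /scalecols.
have := @sl_deriv _ (enum 'I_r) (fun j t => A i j * kappa j * monomials B (upd x k t) j)
  (fun j => A i j * kappa j * (monomials B x j * (B j k * / x k))) (x k)
  (fun j => derivable_pt_lim_scal _ (A i j * kappa j) (x k) _ (hm j)).
have -> : sl (enum 'I_r) (fun j => A i j * kappa j * (monomials B x j * (B j k * / x k))) =
          sumI (fun j => A i j * (kappa j * monomials B x j) * (B j k * / x k)).
{ rewrite sumI_sl; apply: sl_ext => j; ring. }
by [].
Qed.

Lemma jac_unique {m n : nat} (g : ('I_n -> R) -> ('I_m -> R)) x J1 J2 :
  is_jacobian g x J1 -> is_jacobian g x J2 -> J1 = J2.
Proof.
move=> h1 h2; apply: functional_extensionality => i; apply: functional_extensionality => k.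
exact: uniqueness_limite (h1 i k) (h2 i k).
Qed.

Lemma mm_mv {m r n : nat} (A : 'I_m -> 'I_r -> R) (B : 'I_r -> 'I_n -> R) kappa lambda v :
  mulmv (mulmm (scalecols A kappa) (scalecols B lambda)) v =
  mulmv A (fun j => kappa j * mulmv B (fun k => lambda k * v k) j).
Proof.
apply: functional_extensionality => i.
rewrite /mulmv /mulmm /scalecols !sumI_sl.
rewrite (@sl_ext _ _ _ (fun k => sl (enum 'I_r) (fun j => A i j * kappa j * (B j k * lambda k) * v k))); last first.
{ move=> k; by rewrite sl_mulr. }
rewrite sl_swap; apply: sl_ext => j.
rewrite -!sl_scal; apply: sl_ext => k; ring.
Qed.

Lemma mono_pos {r n : nat} (B : 'I_r -> 'I_n -> R) x j : 0 < monomials B x j.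
Proof. rewrite mono_exp; exact: exp_pos. Qed.

Lemma Ldiff {r n : nat} (B : 'I_r -> 'I_n -> R) x y j :
  sumI (fun l => B j l * ln (x l)) - sumI (fun l => B j l * ln (y l)) =
  mulmv B (fun l => ln (x l) - ln (y l)) j.
Proof. rewrite /mulmv !sumI_sl -sl_sub; apply: sl_ext => l; ring. Qed.

Lemma fkdiff {m r n : nat} (A : 'I_m -> 'I_r -> R) (B : 'I_r -> 'I_n -> R) kappa x y i :
  fk A B kappa x i - fk A B kappa y i =
  mulmv A (fun j => kappa j * (monomials B x j - monomials B y j)) i.
Proof. rewrite /fk /mulmv /scalecols !sumI_sl -sl_sub; apply: sl_ext => l; ring. Qed.

Lemma jac_lin {m r n : nat} (A : 'I_m -> 'I_r -> R) (B : 'I_r -> 'I_n -> R) S :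
  (forall kappa x J, posvec kappa -> posvec x ->
               is_jacobian (fk A B kappa) x J -> ker_avoids J S) <->
  (forall kappa lambda, posvec kappa -> posvec lambda ->
               ker_avoids (mulmm (scalecols A kappa) (scalecols B lambda)) S).
Proof.
split.
- move=> H kappa lambda hk hl.
  pose x := fun k => / lambda k.
  have hx : posvec x by move=> k; apply: Rinv_0_lt_compat.
  pose k' := fun j => kappa j / monomials B x j.
  have hk' : posvec k' by move=> j; apply: Rdiv_lt_0_compat; [exact: hk|exact: mono_pos].
  have := H k' x _ hk' hx (jac_formula A B k' x hx).
  have e1 : (fun j => k' j * monomials B x j) = kappa.
  { apply: functional_extensionality => j; rewrite /k'; field.
    have := mono_pos B x j; lra. }
  have e2 : (fun k => / x k) = lambda.
  { apply: functional_extensionality => k; by rewrite /x Rinv_inv. }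
  by rewrite /Jf e1 e2.
- move=> H kappa x J hk hx hJ.
  rewrite (jac_unique _ _ _ _ hJ (jac_formula A B kappa x hx)) /Jf.
  apply: H => j.
  + apply: Rmult_lt_0_compat; [exact: hk|exact: mono_pos].
  + exact: Rinv_0_lt_compat.
Qed.

Lemma lin_sig {m r n : nat} (A : 'I_m -> 'I_r -> R) (B : 'I_r -> 'I_n -> R) S :
  (forall kappa lambda, posvec kappa -> posvec lambda ->
               ker_avoids (mulmm (scalecols A kappa) (scalecols B lambda)) S) <->
  ~ (exists s : 'I_r -> comparison,
                 (exists u, mulmv A u = (@zerov m) /\ signvec u = s) /\
                 (exists v, Sigma_set (nonzero_part S) v /\ signvec (mulmv B v) = s)).
Proof.
split.
- move=> H [s [[u [hu su]] [v [[w [[hw hw0] sw]] sv]]]].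
  have hwv : forall i, sgnR (w i) = sgnR (v i).
  { move=> i; have := f_equal (fun f => f i) sw; rewrite /signvec => ->. done. }
  have hbu : forall j, sgnR (mulmv B v j) = sgnR (u j).
  { move=> j; have := f_equal (fun f => f j) sv; have := f_equal (fun f => f j) su.
    rewrite /signvec => -> ->. done. }
  pose lambda := fun i => divf (w i) (v i).
  pose kappa := fun j => divf (mulmv B v j) (u j).
  have hl : posvec lambda by move=> i; apply: divf_pos.
  have hk : posvec kappa by move=> j; apply: divf_pos.
  apply: (H kappa lambda hk hl w hw hw0).
  rewrite mm_mv.
  have e1 : (fun k => lambda k * w k) = v.
  { apply: functional_extensionality => k; exact: divf_mul. }
  rewrite e1.
  have e2 : (fun j => kappa j * mulmv B v j) = u.
  { apply: functional_extensionality => j; exact: divf_mul. }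
  by rewrite e2.
- move=> Hs kappa lambda hk hl v hv hv0 hM; apply: Hs.
  exists (signvec (fun j => kappa j * mulmv B (fun k => lambda k * v k) j)).
  split.
  + exists (fun j => kappa j * mulmv B (fun k => lambda k * v k) j); split => //.
    by rewrite -mm_mv.
  + exists (fun k => lambda k * v k); split.
    * exists v; split; first by split.
      apply: functional_extensionality => k; rewrite /signvec sgn_mulpos //.
    * apply: functional_extensionality => j; rewrite /signvec sgn_mulpos //.
Qed.

Lemma inj_sig {m r n : nat} (A : 'I_m -> 'I_r -> R) (B : 'I_r -> 'I_n -> R) S :
  (forall kappa, posvec kappa -> injective_wrt (fk A B kappa) S) <->
  ~ (exists s : 'I_r -> comparison,
                 (exists u, mulmv A u = (@zerov m) /\ signvec u = s) /\
                 (exists v, Sigma_set (nonzero_part S) v /\ signvec (mulmv B v) = s)).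
Proof.
split.
- move=> H [s [[u [hu su]] [v [[w [[hw hw0] sw]] sv]]]].
  have hwv : forall i, sgnR (w i) = sgnR (v i).
  { move=> i; have := f_equal (fun f => f i) sw; rewrite /signvec => ->. done. }
  have hbu : forall j, sgnR (mulmv B v j) = sgnR (u j).
  { move=> j; have := f_equal (fun f => f j) sv; have := f_equal (fun f => f j) su.
    rewrite /signvec => -> ->. done. }
  pose x := fun i => pickx (w i) (v i).
  pose y := fun i => picky (w i) (v i).
  have hx : posvec x by move=> i; case: (pick_ok _ _ (hwv i)).
  have hy : posvec y by move=> i; case: (pick_ok _ _ (hwv i)) => _ [].
  have hxy : forall i, x i - y i = w i by move=> i; case: (pick_ok _ _ (hwv i)) => _ [] _ [].
  have hln : forall i, ln (x i) - ln (y i) = v i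
    by move=> i; case: (pick_ok _ _ (hwv i)) => _ [] _ [].
  have ev : (fun l => ln (x l) - ln (y l)) = v by apply: functional_extensionality.
  have hsg : forall j, sgnR (monomials B x j - monomials B y j) = sgnR (u j).
  { move=> j; rewrite !mono_exp sgn_exp_diff Ldiff ev; exact: hbu. }
  pose kappa := fun j => divf (monomials B x j - monomials B y j) (u j).
  have hk : posvec kappa by move=> j; apply: divf_pos.
  apply: (H kappa hk x y hx hy).
  + move=> e; apply: hw0; apply: functional_extensionality => i.
    rewrite /zerov -hxy e; ring.
  + have -> : subv x y = w by apply: functional_extensionality => i; exact: hxy.
    done.
  + apply: functional_extensionality => i; apply: Rminus_diag_uniq.
    rewrite fkdiff.
    have -> : (fun j => kappa j * (monomials B x j - monomials B y j)) = u.
    { apply: functional_extensionality => j; exact: divf_mul. }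
    by rewrite hu.
- move=> Hs kappa hk x y hx hy hne hS hf; apply: Hs.
  pose u := fun j => kappa j * (monomials B x j - monomials B y j).
  pose v := fun l => ln (x l) - ln (y l).
  exists (signvec u); split.
  + exists u; split => //.
    apply: functional_extensionality => i; rewrite /u -fkdiff hf /zerov; ring.
  + exists v; split.
    * exists (subv x y); split.
      -- split => // e; apply: hne; apply: functional_extensionality => i.
         have := f_equal (fun f => f i) e; rewrite /subv /zerov /=; lra.
      -- apply: functional_extensionality => l; rewrite /signvec /v /subv sgn_ln_diff //.
    * apply: functional_extensionality => j.
      rewrite /signvec /u sgn_mulpos // !mono_exp sgn_exp_diff Ldiff //.
Qed.

Theorem theorem1 (m r n : nat) (A : 'I_m -> 'I_r -> R) (B : 'I_r -> 'I_n -> R)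
  (S : ('I_n -> R) -> Prop) :
  let inj := forall kappa, posvec kappa -> injective_wrt (fk A B kappa) S in
  let jac := forall kappa x J, posvec kappa -> posvec x ->
               is_jacobian (fk A B kappa) x J -> ker_avoids J S in
  let lin := forall kappa lambda, posvec kappa -> posvec lambda ->
               ker_avoids (mulmm (scalecols A kappa) (scalecols B lambda)) S in
  let sig := ~ (exists s : 'I_r -> comparison,
                 (exists u, mulmv A u = (@zerov m) /\ signvec u = s) /\
                 (exists v, Sigma_set (nonzero_part S) v /\ signvec (mulmv B v) = s)) in
  (inj <-> jac) /\ (jac <-> lin) /\ (lin <-> sig).
Proof.
cbv zeta.
have h1 := jac_lin A B S.
have h2 := lin_sig A B S.
have h3 := inj_sig A B S.
split; [|split] => //.
rewrite h3 h1 h2; reflexivity.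
Qed.
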